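(* Let $\mathfrak B,\mathfrak D^+,\mathfrak D^-$ be Banach spaces and let $I^+\colon\mathfrak D^+\to\mathfrak B$, $I^-\colon\mathfrak B\to\mathfrak D^-$ be injective continuous linear embeddings with dense ranges. Let $T\colon\mathfrak D^+\to\mathfrak D^-$ be a bounded linear operator, and let $T^\bullet=(I^-)^{-1}T(I^+)^{-1}$ be the operator in $\mathfrak B$ with domain $\{x\in I^+(\mathfrak D^+)\;:\;T(I^+)^{-1}x\in I^-(\mathfrak B)\}$, acting by $T^\bullet x=(I^-)^{-1}T(I^+)^{-1}x$. Suppose that for some $A\in\mathcal B(\mathfrak B)$ the operator $T-I^-AI^+$ has a bounded inverse. Then for every $\lambda$ in the resolvent set $\varrho(T^\bullet)$ the operator $T-\lambda I^-I^+\colon\mathfrak D^+\to\mathfrak D^-$ also has a bounded inverse.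
   Context: ''Has a bounded inverse'' means: the operator is a bijection of $\mathfrak D^+$ onto $\mathfrak D^-$ with bounded inverse. *)

(* Defs.v *)
From HB Require Import structures.
From mathcomp Require Import all_boot all_order all_algebra.
From mathcomp Require Import all_classical all_reals all_analysis.
Set Implicit Arguments. Unset Strict Implicit. Unset Printing Implicit Defensive.
Import Order.TTheory GRing.Theory Num.Theory.
Import numFieldNormedType.Exports.
Local Open Scope classical_set_scope.
Local Open Scope ring_scope.

(* "f : U -> V has a bounded inverse": f is a bijection of U onto V whose
   inverse is bounded (= continuous, the inverse of a linear map being linear). *)
Definition has_bounded_inverse (K : numFieldType) (U V : normedModType K)
  (f : U -> V) : Prop :=
  exists g : V -> U, cancel f g /\ cancel g f /\ continuous g.

Definition bullet_dom (K : numFieldType) (Dp B Dm : normedModType K)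
  (Ip : Dp -> B) (Im : B -> Dm) (T : Dp -> Dm) : set B :=
  [set x | exists u, x = Ip u /\ exists y, T u = Im y].

(* Action of T^bullet: for x in the domain, the unique y with
   I^- y = T (I^+)^{-1} x (outside the domain the value is irrelevant). *)
Definition bullet (K : numFieldType) (Dp B Dm : normedModType K)
  (Ip : Dp -> B) (Im : B -> Dm) (T : Dp -> Dm) (x : B) : B :=
  get [set y | exists u, x = Ip u /\ T u = Im y].

Definition resolvent_set (K : numFieldType) (B : normedModType K)
  (D : set B) (S : B -> B) : set K :=
  [set lam | exists R : B -> B,
     continuous R /\
     (forall g, D (R g) /\ S (R g) - lam *: R g = g) /\
     (forall x, D x -> R (S x - lam *: x) = x)].

(* Main.v *)
Require Import Defs.
From HB Require Import structures.
From mathcomp Require Import all_boot all_order all_algebra.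
From mathcomp Require Import all_classical all_reals all_analysis.
Import Order.TTheory GRing.Theory Num.Theory.
Import numFieldNormedType.Exports.
Local Open Scope classical_set_scope.
Local Open Scope ring_scope.

Section H.
Variables (K : numFieldType).

Lemma cc_comp (X Y Z : topologicalType) (f : X -> Y) (g : Y -> Z) :
  continuous f -> continuous g -> continuous (fun x => g (f x)).
Proof. by move=> hf hg x; apply: continuous_comp; [exact: hf | exact: hg]. Qed.

Lemma cc_D (X : topologicalType) (V : normedModType K) (f g : X -> V) :
  continuous f -> continuous g -> continuous (fun x => f x + g x).
Proof. by move=> hf hg x; exact: (continuousD (hf x) (hg x)). Qed.

Lemma cc_B (X : topologicalType) (V : normedModType K) (f g : X -> V) :
  continuous f -> continuous g -> continuous (fun x => f x - g x).
Proof. by move=> hf hg x; exact: (continuousB (hf x) (hg x)). Qed.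

Lemma cc_Z (X : topologicalType) (V : normedModType K) (f : X -> V) (k : K) :
  continuous f -> continuous (fun x => k *: f x).
Proof. by move=> hf x; exact: (continuousZr (hf x)). Qed.
End H.

Lemma helper (V : zmodType) (t s a r : V) : t + (s - a + r) - (s + r) = t - a.
Proof. by rewrite -addrA; congr (_ + _); rewrite opprD addrACA subrr addr0 addrAC subrr add0r. Qed.

Lemma helper2 (V : zmodType) (t a b : V) : t - a + b - t - (b - a) = 0.
Proof. by rewrite (addrAC (t - a)) (addrAC t) subrr add0r addrC subrr. Qed.

Lemma bullet_eq (K : numFieldType) (Dp B Dm : normedModType K)
  (Ip : Dp -> B) (Im : B -> Dm) (T : Dp -> Dm) u y :
  injective Ip -> injective Im -> T u = Im y -> bullet Ip Im T (Ip u) = y.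
Proof.
move=> iIp iIm Tu; rewrite /bullet.
have : exists y0, [set y | exists u0, Ip u = Ip u0 /\ T u0 = Im y] y0.
  by exists y, u.
move=> /getPex [u0 [/iIp <- h]]; apply: iIm; by rewrite -h Tu.
Qed.

Theorem mainTheorem3 (K : numFieldType) (Dp B Dm : completeNormedModType K)
  (Ip : {linear Dp -> B}) (Im : {linear B -> Dm}) (T : {linear Dp -> Dm})
  (A : {linear B -> B}) :
  continuous Ip -> injective Ip -> dense (range Ip) ->
  continuous Im -> injective Im -> dense (range Im) ->
  continuous T -> continuous A ->
  has_bounded_inverse (fun u : Dp => T u - Im (A (Ip u))) ->
  forall lam : K, resolvent_set (bullet_dom Ip Im T) (bullet Ip Im T) lam ->
  has_bounded_inverse (fun u : Dp => T u - lam *: Im (Ip u)).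
Proof.
move=> cIp iIp _ cIm iIm _ cT cA [G [GK [KG cG]]] lam [R [cR [Rr Rl]]].
set b := fun y => lam *: Ip (G y) - A (Ip (G y)).
set F := fun y => G y + G (Im (b y + lam *: R (b y) - A (R (b y)))).
have cb : continuous b.
  rewrite /b; apply: (@cc_B _ _ _ (fun y => lam *: Ip (G y)) (fun y => A (Ip (G y)))).
    by apply: (@cc_Z _ _ _ (fun y => Ip (G y))); exact: cc_comp.
  by apply: (@cc_comp _ _ _ (fun y => Ip (G y))) => //; exact: cc_comp.
have cF : continuous F.
  rewrite /F; apply: (@cc_D _ _ _ (G)) => //.
  apply: (@cc_comp _ _ _ (fun y => Im (b y + lam *: R (b y) - A (R (b y))))) => //; apply: (@cc_comp _ _ _ _ Im) => //.
  apply: (@cc_B _ _ _ (fun y => b y + lam *: R (b y)) (fun y => A (R (b y)))).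
    apply: (@cc_D _ _ _ (b)) => //; apply: (@cc_Z _ _ _ (fun y => R (b y))).
    exact: cc_comp.
  by apply: (@cc_comp _ _ _ (fun y => R (b y))) => //; exact: cc_comp.
have FS : cancel F (fun u : Dp => T u - lam *: Im (Ip u)).
  move=> y; rewrite /F.
  have [Dx Ex] := Rr (b y).
  set x := R (b y) in Dx Ex *.
  case: Dx => v' [xE [y' Tv']].
  have bx : bullet Ip Im T x = y' by rewrite xE; exact: bullet_eq.
  rewrite bx in Ex.
  have -> : G (Im (b y + lam *: x - A x)) = v'.
    rewrite -[v' in RHS]GK; congr G.
    by rewrite Tv' -xE -Ex subrK linearB.
  have T0 := KG y.
  have y'E : y' = b y + lam *: x by rewrite -Ex subrK.
  rewrite !linearD /= Tv' -xE y'E /b -[X in _ = X]T0.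
  rewrite linearD linearB !linearZ /=  !scalerN -opprD; exact: helper.
have R0 : R 0 = 0.
  have D0 : bullet_dom Ip Im T 0.
    by exists 0; split; [rewrite linear0 | exists 0; rewrite !linear0].
  have := Rl 0 D0.
  have -> : bullet Ip Im T 0 = 0.
    by rewrite -(linear0 Ip); apply: bullet_eq => //; rewrite !linear0.
  by rewrite scaler0 subr0.
have injS : injective (fun u : Dp => T u - lam *: Im (Ip u)).
  move=> u1 u2 /= h.
  apply/eqP; rewrite -subr_eq0; apply/eqP.
  set w := u1 - u2.
  have Tw : T w = Im (lam *: Ip w).
    apply/eqP; rewrite -subr_eq0 linearZ; apply/eqP.
    rewrite /w !linearB /=; move/eqP: h; rewrite subr_eq => /eqP ->.
    by rewrite scalerBr helper2.
  have Dw : bullet_dom Ip Im T (Ip w) by exists w; split => //; exists (lam *: Ip w).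
  have := Rl (Ip w) Dw.
  rewrite (@bullet_eq _ _ _ _ _ _ _ _ _ iIp iIm Tw) subrr R0 => /esym.
  by rewrite -(linear0 Ip) => /iIp.
exists F; split; last by split.
by move=> u; apply: injS; rewrite FS.
Qed.
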